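(* Let $\mu$ be a distribution over $\{0,1\}^V$ and $\theta\in(0,1)$. The Markov chains $P_{\pi\text{-GD}}$, $P_{\mathrm{cl}}$ and $P_{\mathrm{s\text{-}GD}}$ are all reversible with respect to $\pi$.
   Context: Tilted $(\theta*\mu)(\sigma)\propto\mu(\sigma)\theta^{\|\sigma\|_1}$. $\mathsf{lift}:\{0,1\}^V\to\{0,1,\star\}^V$ random: independently per coordinate $0\mapsto0$, $1\mapsto\star$ w.p. $1-\theta$, $1\mapsto1$ w.p. $\theta$; $\mathsf{contr}$: $0\mapsto0$, $1,\star\mapsto1$. $\pi$: law of $\mathsf{lift}(X)$, $X\sim\mu$, support $\Omega(\pi)$. $P_{\pi\text{-GD}}$: pick $v$ uniformly, resample $X_v$ from $\pi$ given $X_{V\setminus\{v\}}$. $P_{\mathrm{cl}}$: $X\mapsto\mathsf{lift}(\mathsf{contr}(X))$. $P_{\mathrm{s\text{-}GD}}$: pick $v$ uniformly; if $X_v=\star$ keep; otherwise resample $X_v\in\{0,1\}$ from $(\theta*\mu)_v^{\sigma_{V\setminus\{v\}}}$, $\sigma=\mathsf{contr}(X)$. Reversible w.r.t. $\pi$: $\pi(\sigma)P(\sigma,\tau)=\pi(\tau)P(\tau,\sigma)$ for all $\sigma,\tau\in\Omega(\pi)$. *)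

(* Defs.v *)
From HB Require Import structures.
From mathcomp Require Import all_boot all_order all_algebra.
Set Implicit Arguments. Unset Strict Implicit. Unset Printing Implicit Defensive.
Import Order.TTheory GRing.Theory Num.Theory.
Local Open Scope ring_scope.

Inductive spin := S0 | S1 | Sstar.

Definition spin_enc (s : spin) : option bool :=
  match s with S0 => Some false | S1 => Some true | Sstar => None end.
Definition spin_dec (o : option bool) : spin :=
  match o with Some false => S0 | Some true => S1 | None => Sstar end.
Lemma spin_encK : cancel spin_enc spin_dec. Proof. by case. Qed.
HB.instance Definition _ := Finite.copy spin (can_type spin_encK).

Section Defs.
Variables (R : realFieldType) (V : finType).

Notation conf := {ffun V -> bool}.     (* {0,1}^V, true = 1 *)
Notation lconf := {ffun V -> spin}.

Definition is_distribution (mu : conf -> R) :=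
  (forall s, 0 <= mu s) /\ \sum_s mu s = 1.

Definition norm1 (s : conf) : nat := #|[set v | s v]|.

Definition tilted (mu : conf -> R) (theta : R) (s : conf) : R :=
  mu s * theta ^+ norm1 s / \sum_t (mu t * theta ^+ norm1 t).

Definition upd (T : Type) (x : {ffun V -> T}) (v : V) (c : T) : {ffun V -> T} :=
  [ffun u => if u == v then c else x u].

(* conditional marginal nu_v^{sigma_{V \ v}}(b) = P_nu(X_v = b | X_{V\v} = sigma_{V\v}) *)
Definition cond_marg (nu : conf -> R) (s : conf) (v : V) (b : bool) : R :=
  nu (upd s v b) / (nu (upd s v false) + nu (upd s v true)).

Definition contr (x : lconf) : conf := [ffun v => x v != S0].

(* one-site probability that lift maps a to s *)
Definition lift1 (theta : R) (a : bool) (s : spin) : R :=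
  match a, s with
  | false, S0 => 1
  | false, _ => 0
  | true, S0 => 0
  | true, S1 => theta
  | true, Sstar => 1 - theta
  end.

Definition lift_prob (theta : R) (s : conf) (t : lconf) : R :=
  \prod_v lift1 theta (s v) (t v).

Definition pi_law (mu : conf -> R) (theta : R) (t : lconf) : R :=
  \sum_s mu s * lift_prob theta s t.

Definition in_support (mu : conf -> R) (theta : R) (t : lconf) : bool :=
  pi_law mu theta t != 0.

Definition agree_off (x y : lconf) (v : V) : bool :=
  [forall u, (u != v) ==> (x u == y u)].

Definition P_piGD (mu : conf -> R) (theta : R) (x y : lconf) : R :=
  #|V|%:R^-1 * \sum_v
    (if agree_off x y v then
       pi_law mu theta y / \sum_(c : spin) pi_law mu theta (upd x v c)
     else 0).

Definition P_cl (theta : R) (x y : lconf) : R :=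
  lift_prob theta (contr x) y.

Definition P_sGD (mu : conf -> R) (theta : R) (x y : lconf) : R :=
  #|V|%:R^-1 * \sum_v
    (if x v == Sstar then (if y == x then 1 else 0)
     else if agree_off x y v && (y v != Sstar) then
       cond_marg (tilted mu theta) (contr x) v (y v == S1)
     else 0).

Definition reversible (mu : conf -> R) (theta : R) (P : lconf -> lconf -> R) :=
  forall x y, in_support mu theta x -> in_support mu theta y ->
    pi_law mu theta x * P x y = pi_law mu theta y * P y x.

End Defs.

(* Main.v *)
Require Import Defs.
From HB Require Import structures.
From mathcomp Require Import all_boot all_order all_algebra.
From mathcomp Require Import ring.
Import Order.TTheory GRing.Theory Num.Theory.
Local Open Scope ring_scope.
Set Implicit Arguments. Unset Strict Implicit.

Section Aux.
Variables (R : realFieldType) (V : finType).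

Lemma agreeP (x y : {ffun V -> spin}) v u :
  agree_off x y v -> u != v -> x u = y u.
Proof. by move=> /forallP/(_ u)/implyP H hu; apply/eqP/H. Qed.

Lemma agreeC (x y : {ffun V -> spin}) v : agree_off x y v = agree_off y x v.
Proof.
by apply/forallP/forallP => H u; apply/implyP => hu; rewrite eq_sym;
  move/implyP: (H u); apply.
Qed.

Lemma upd_agree' (x y : {ffun V -> spin}) v c :
  agree_off x y v -> upd x v c = upd y v c.
Proof.
move=> ag; apply/ffunP => u; rewrite !ffunE; case: eqP => // /eqP hu.
exact: agreeP ag hu.
Qed.

Lemma upd_contr (x y : {ffun V -> spin}) v b :
  agree_off x y v -> upd (contr x) v b = upd (contr y) v b.
Proof.
move=> ag; apply/ffunP => u; rewrite !ffunE; case: eqP => // /eqP hu.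
by rewrite (agreeP ag hu).
Qed.

Lemma upd_contr_self (x y : {ffun V -> spin}) v :
  agree_off x y v -> y v != Sstar -> upd (contr x) v (y v == S1) = contr y.
Proof.
move=> ag hy; apply/ffunP => u; rewrite !ffunE; case: (eqVneq u v) => [->|hu].
  by case: (y v) hy.
by rewrite (agreeP ag hu).
Qed.

Lemma lift_prob_neq (theta : R) (s : {ffun V -> bool}) (t : {ffun V -> spin}) :
  s != contr t -> lift_prob theta s t = 0.
Proof.
move=> ne.
have : [exists u, s u != contr t u].
  apply: contraR ne => /existsPn h; apply/eqP/ffunP => u.
  by apply/eqP; move: (h u); rewrite negbK.
case/existsP => u hu.
rewrite /lift_prob (bigD1 u) //= (_ : lift1 _ _ _ = 0) ?mul0r //.
move: hu; rewrite ffunE; by case: (s u); case: (t u).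
Qed.

Lemma pi_law_eq (mu : {ffun V -> bool} -> R) theta x :
  pi_law mu theta x = mu (contr x) * lift_prob theta (contr x) x.
Proof.
rewrite /pi_law (bigD1 (contr x)) //= big1 ?addr0 // => s hs.
by rewrite lift_prob_neq ?mulr0.
Qed.

Lemma norm1_prod (theta : R) (s : {ffun V -> bool}) :
  theta ^+ norm1 s = \prod_u (if s u then theta else 1).
Proof.
rewrite /norm1 -prodr_const big_mkcond; apply: eq_bigr => u _.
by rewrite inE.
Qed.

Lemma w_swap (theta : R) (x y : {ffun V -> spin}) v :
  agree_off x y v -> x v != Sstar -> y v != Sstar ->
  lift_prob theta (contr x) x * theta ^+ norm1 (contr y) =
  lift_prob theta (contr y) y * theta ^+ norm1 (contr x).
Proof.
move=> ag hx hy.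
rewrite !norm1_prod /lift_prob -!big_split /= (bigD1 v) //= [RHS](bigD1 v) //=.
congr (_ * _).
  rewrite !ffunE; case: (x v) hx => // _; case: (y v) hy => // _ /=; by rewrite ?mulr1 ?mul1r // mulrC.
apply: eq_bigr => u hu; by rewrite !ffunE (agreeP ag hu).
Qed.

End Aux.

Theorem lemma5p5 (R : realFieldType) (V : finType)
  (mu : {ffun V -> bool} -> R) (theta : R) :
  is_distribution mu -> 0 < theta < 1 ->
  [/\ reversible mu theta (P_piGD mu theta),
      reversible mu theta (P_cl (V:=V) theta)
    & reversible mu theta (P_sGD mu theta)].
Proof.
move=> _ _; split => x y _ _.
- rewrite /P_piGD mulrCA [RHS]mulrCA; congr (_ * _).
  rewrite !mulr_sumr; apply: eq_bigr => v _.
  rewrite agreeC; case ag: (agree_off y x v); last by rewrite !mulr0.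
  have -> : \sum_c pi_law mu theta (upd y v c) = \sum_c pi_law mu theta (upd x v c).
    by apply: eq_bigr => c _; rewrite (upd_agree' _ ag).
  by rewrite mulrCA.
- rewrite /P_cl !pi_law_eq.
  case: (eqVneq (contr x) (contr y)) => e.
    by rewrite e; ring.
  have e' : contr y != contr x by rewrite eq_sym.
  by rewrite (lift_prob_neq theta e) (lift_prob_neq theta e') !mulr0.
- case: (eqVneq y x) => [->|nyx]; first by [].
  rewrite /P_sGD mulrCA [RHS]mulrCA; congr (_ * _).
  rewrite !mulr_sumr; apply: eq_bigr => v _.
  have nxy : (x == y) = false by apply/negbTE; rewrite eq_sym.
  rewrite (negbTE nyx) nxy.
  case hxv: (x v == Sstar).
    case hyv: (y v == Sstar); first by rewrite !mulr0.
    by rewrite /= ?andbF !mulr0.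
  case hyv: (y v == Sstar); first by rewrite /= ?andbF !mulr0.
  rewrite /= ?andbT agreeC.
  case ag: (agree_off y x v); last by rewrite !mulr0.
  have ag' : agree_off x y v by rewrite agreeC.
  rewrite /cond_marg (upd_contr_self ag') ?hyv // (upd_contr_self ag) ?hxv //.
  rewrite !(upd_contr _ ag') !pi_law_eq /tilted.
  have := w_swap theta ag' (negbT hxv) (negbT hyv).
  set wx := lift_prob _ _ x; set wy := lift_prob _ _ y.
  set tx := theta ^+ _; set ty := theta ^+ _ => hk.
  set Z := \sum_t _.
  clearbody wx wy tx ty.
  move: (mu (contr x)) (mu (contr y)) Z => a b Z.
  rewrite !mulrA; congr (_ * _ * _).
  transitivity (a*b*(wx*tx)); first by ring.
  by rewrite hk; ring.
Qed.
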